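(* Let $k\ge1$, $A,B_1,\dots,B_k,C_1,\dots,C_k\in\mathbb{C}^{r\times r}$ with $C_j+mI$ invertible for all $m\ge0$ and all $j$, and $C_iC_j=C_jC_i$ for all $i,j$. Fix $i$ and $n\ge1$, and suppose $B_i+mI$ is invertible for all $m\ge0$. Then $$F_{\mathcal A}[B_i+nI]=\sum_{n_1=0}^n\binom{n}{n_1}(A)_{n_1}x_i^{n_1}\,F_{\mathcal A}[A+n_1I,\,B_i+n_1I,\,C_i+n_1I]\,(C_i)^{-1}_{n_1}.$$ Furthermore, if $B_i-n_1I$ is invertible for $0\le n_1\le n$, then $$F_{\mathcal A}[B_i-nI]=\sum_{n_1=0}^n\binom{n}{n_1}(A)_{n_1}(-x_i)^{n_1}\,F_{\mathcal A}[A+n_1I,\,C_i+n_1I]\,(C_i)^{-1}_{n_1}.$$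
   Context: For $M\in\mathbb{C}^{r\times r}$: $(M)_0=I$, $(M)_m=M(M+I)\cdots(M+(m-1)I)$, $(M)^{-1}_m=((M)_m)^{-1}$. $$F_{\mathcal A}=F_{\mathcal A}[A,B_1,\dots,B_k;C_1,\dots,C_k;x_1,\dots,x_k]=\sum_{m_1,\dots,m_k\ge0}(A)_{m_1+\cdots+m_k}\prod_{j=1}^k(B_j)_{m_j}\prod_{j=1}^k(C_j)^{-1}_{m_j}\prod_{j=1}^k\frac{x_j^{m_j}}{m_j!},$$ $x_j$ scalar variables, matrix products in order of increasing index; identities are of formal power series in the $x_j$. $F_{\mathcal A}[\dots]$ lists only the shifted parameters, all others unchanged (in the second formula $B_i$ is unshifted). *)

(* Defs.v *)
From HB Require Import structures.
From mathcomp Require Import all_boot all_order all_algebra.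
From mathcomp Require Import complex reals.
Set Implicit Arguments. Unset Strict Implicit. Unset Printing Implicit Defensive.
Import Order.TTheory GRing.Theory Num.Theory.
Local Open Scope ring_scope.

Section Defs.
Variable (F : fieldType) (r : nat).

Fixpoint mpoch (M : 'M[F]_r) (m : nat) : 'M[F]_r :=
  if m is m'.+1 then mpoch M m' *m (M + (m'%:R)%:M) else 1%:M.

Definition mpochinv (M : 'M[F]_r) (m : nat) : 'M[F]_r := invmx (mpoch M m).

Definition mxprod_ord (k : nat) (f : 'I_k -> 'M[F]_r) : 'M[F]_r :=
  foldr (fun j acc => f j *m acc) 1%:M (enum 'I_k).

(* The formal power series F_A[A,B,C;x] represented by its coefficient
   family: coefficient of x_1^{m_1}...x_k^{m_k}. *)
Definition FA_coef (k : nat) (A : 'M[F]_r) (B C : 'I_k -> 'M[F]_r)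
  (m : 'I_k -> nat) : 'M[F]_r :=
  (\prod_(j < k) (m j)`!%:R)^-1 *:
   (mpoch A (\sum_(j < k) m j)
    *m mxprod_ord (fun j => mpoch (B j) (m j))
    *m mxprod_ord (fun j => mpochinv (C j) (m j))).

Definition shift_at (k : nat) (B : 'I_k -> 'M[F]_r) (i : 'I_k) (n : int)
  : 'I_k -> 'M[F]_r :=
  fun j => if j == i then B j + (n%:~R)%:M else B j.

(* multi-index m - n1 e_i (only used when n1 <= m i) *)
Definition dec_at (k : nat) (m : 'I_k -> nat) (i : 'I_k) (n1 : nat)
  : 'I_k -> nat := fun j => if j == i then (m j - n1)%N else m j.

End Defs.

(* Main.v *)
Require Import Defs.
From HB Require Import structures.
From mathcomp Require Import all_boot all_order all_algebra.
From mathcomp Require Import complex reals.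
From mathcomp Require Import ring zify.
Import Order.TTheory GRing.Theory Num.Theory.
Local Open Scope ring_scope.

Section Gen.
Variable (F : fieldType) (r : nat).
Implicit Types (M N P Q X Y : 'M[F]_r).

Definition cm X Y := X *m Y = Y *m X.

Lemma mpoch_add M a b :
  mpoch M (a + b) = mpoch M a *m mpoch (M + (a%:R)%:M) b.
Proof.
elim: b => [|b IH]; first by rewrite addn0 /= mulmx1.
rewrite addnS /= IH -mulmxA natrD (raddfD (@scalar_mx F r)) addrA.
by [].
Qed.

Lemma mpochSl M m : mpoch M m.+1 = M *m mpoch (M + 1%:M) m.
Proof.
have -> : m.+1 = (1 + m)%N by [].
rewrite mpoch_add /= mul1mx (raddf0 (@scalar_mx F r)) addr0.
by [].
Qed.

Lemma cm_sh X Y a : cm X Y -> cm X (Y + a%:M).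
Proof. by rewrite /cm mulmxDr mulmxDl scalar_mxC => ->. Qed.

Lemma cm_sym X Y : cm X Y -> cm Y X.
Proof. by []. Qed.

Lemma cm_poch X Y m : cm X Y -> cm X (mpoch Y m).
Proof.
move=> h; elim: m => [|m IH] /=; first by rewrite /cm mulmx1 mul1mx.
rewrite /cm mulmxA IH -!mulmxA.
by have := @cm_sh _ _ (m%:R) h; rewrite /cm => ->.
Qed.

Lemma cm_poch2 X Y p q : cm X Y -> cm (mpoch X p) (mpoch Y q).
Proof.
move=> h; elim: p => [|p IH] /=; first by rewrite /cm mulmx1 mul1mx.
have h2 : cm (X + (p%:R)%:M) (mpoch Y q).
  apply: cm_poch; apply: cm_sym; apply: cm_sh; exact: cm_sym.
rewrite /cm -mulmxA h2 !mulmxA IH.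
by [].
Qed.

Lemma mpochS1 N p :
  mpoch (N + 1%:M) p = mpoch N p + (p%:R) *: mpoch (N + 1%:M) p.-1.
Proof.
case: p => [|q]; first by rewrite /= scale0r addr0.
rewrite [mpoch N _]mpochSl.
change (mpoch (N + 1%:M) q *m (N + 1%:M + (q%:R)%:M) =
  N *m mpoch (N + 1%:M) q + (q.+1)%:R *: mpoch (N + 1%:M) q).
have hc : cm N (mpoch (N + 1%:M) q).
  apply: cm_poch; apply: cm_sh; done.
rewrite -addrA -(raddfD (@scalar_mx F r)) mulmxDr hc mul_mx_scalar mulrS.
by [].
Qed.

Lemma mpochN1 N p :
  mpoch (N - 1%:M) p = mpoch N p - (p%:R) *: mpoch N p.-1.
Proof.
case: p => [|q]; first by rewrite /= scale0r subr0.
rewrite mpochSl addrNK.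
change ((N - 1%:M) *m mpoch N q =
  mpoch N q *m (N + (q%:R)%:M) - (q.+1)%:R *: mpoch N q).
have hc : cm N (mpoch N q) by apply: cm_poch.
rewrite mulmxDr mulmxBl mul1mx hc mul_mx_scalar -natr1 scalerDl scale1r.
by rewrite opprD addrA addrK.
Qed.

End Gen.
Arguments cm {F r}.
Arguments mpoch_add {F r}.
Arguments mpochSl {F r}.
Arguments cm_sh {F r}.
Arguments cm_sym {F r}.
Arguments cm_poch {F r}.
Arguments cm_poch2 {F r}.

Section Gen2.
Variable (F : fieldType) (r : nat).
Implicit Types (M N P Q X Y : 'M[F]_r).

Lemma pascal (f : nat -> 'M[F]_r) n :
  \sum_(0 <= j < n.+2) ('C(n.+1, j)%:R : F) *: f j =
  \sum_(0 <= j < n.+1) ('C(n, j)%:R : F) *: f j + \sum_(0 <= j < n.+1) ('C(n, j)%:R : F) *: f j.+1.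
Proof.
rewrite big_nat_recl // [in X in _ = X + _]big_nat_recl //.
rewrite !bin0 -addrA; congr (_ + _).
rewrite [X in _ = X + _](_ : _ = \sum_(0 <= i < n.+1) ('C(n, i.+1)%:R : F) *: f i.+1); last first.
  by rewrite big_nat_recr //= bin_small // scale0r addr0.
rewrite -big_split /=; apply: eq_bigr => j _.
by rewrite binS natrD scalerDl.
Qed.

Lemma poch_plus M n m :
  mpoch (M + (n%:R)%:M) m =
  \sum_(0 <= j < n.+1) ('C(n, j)%:R : F) *: ((m ^_ j)%:R *: mpoch (M + (j%:R)%:M) (m - j)).
Proof.
elim: n M m => [|n IH] M m.
  by rewrite big_nat1 /= bin0 ffactn0 subn0 !scale1r.
have -> : M + (n.+1%:R)%:M = (M + 1%:M) + (n%:R)%:M.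
  by rewrite -addrA -(raddfD (@scalar_mx F r)) -mulrS.
rewrite IH (pascal (fun j => (m ^_ j)%:R *: mpoch (M + (j%:R)%:M) (m - j))).
rewrite -big_split /=; apply: eq_bigr => j _; rewrite -scalerDr; congr (_ *: _).
have -> : M + 1%:M + (j%:R)%:M = (M + (j%:R)%:M) + 1%:M.
  by rewrite -!addrA (addrC 1%:M).
rewrite mpochS1 scalerDr scalerA -natrM -ffactnSr -subnS; congr (_ + _).
by rewrite -natr1 (raddfD (@scalar_mx F r)) addrA.
Qed.

Lemma poch_minus M n m :
  mpoch (M - (n%:R)%:M) m =
  \sum_(0 <= j < n.+1) ((-1) ^+ j * 'C(n, j)%:R : F) *: ((m ^_ j)%:R *: mpoch M (m - j)).
Proof.
elim: n M m => [|n IH] M m.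
  by rewrite big_nat1 /= bin0 ffactn0 subn0 expr0 mulr1 !scale1r (raddf0 (@scalar_mx F r)) subr0.
have -> : M - (n.+1%:R)%:M = (M - 1%:M) - (n%:R)%:M.
  by rewrite -addrA -opprD -(raddfD (@scalar_mx F r)) -mulrS.
rewrite IH.
transitivity (\sum_(0 <= j < n.+2) ('C(n.+1, j)%:R : F) *:
   (((-1) ^+ j * (m ^_ j)%:R) *: mpoch M (m - j))); last first.
  by apply: eq_bigr => j _; rewrite !scalerA mulrCA mulrA.
rewrite (pascal (fun j => ((-1) ^+ j * (m ^_ j)%:R) *: mpoch M (m - j))).
rewrite -big_split /=; apply: eq_bigr => j _; rewrite -scalerDr.
rewrite mpochN1 scalerBr -subnS !scalerA exprS ffactnSr natrM scalerBr scalerDr !scalerA -scaleNr.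
by congr (_ *: _ + _ *: _); ring.
Qed.

End Gen2.
Arguments poch_plus {F r}.
Arguments poch_minus {F r}.

Section Prod.
Variable (F : fieldType) (r k : nat).
Implicit Types (X Y : 'M[F]_r) (f g h : 'I_k -> 'M[F]_r) (s : seq 'I_k) (i : 'I_k).

Definition gsel (h : 'I_k -> 'M[F]_r) (i : 'I_k) X : 'I_k -> 'M[F]_r :=
  fun j => if j == i then X else h j.

Definition fprod (f : 'I_k -> 'M[F]_r) (s : seq 'I_k) :=
  foldr (fun j acc => f j *m acc) 1%:M s.

Lemma fprod_eq f g s : (forall j, f j = g j) -> fprod f s = fprod g s.
Proof. by move=> e; elim: s => //= j s ->; rewrite e. Qed.

Lemma mxprod_eq f g : (forall j, f j = g j) -> mxprod_ord f = mxprod_ord g.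
Proof. exact: fprod_eq. Qed.

Lemma PL1 h i X Y s : i \notin s -> fprod (gsel h i X) s = fprod (gsel h i Y) s.
Proof.
elim: s => //= j s IH; rewrite in_cons negb_or => /andP[ne ns].
by rewrite IH // /gsel eq_sym (negbTE ne).
Qed.

Lemma PL2 h i s : uniq s -> i \in s ->
  exists L R, forall X, fprod (gsel h i X) s = L *m X *m R.
Proof.
elim: s => //= j s IH /andP[js us]; rewrite in_cons.
case: (eqVneq j i) => [eji _|ne /= ins].
  subst j.
  exists 1%:M, (fprod (gsel h i 0) s) => X; rewrite mul1mx {1}/gsel eqxx.
  by rewrite (PL1 _ _ X 0 _ js).
have [L [R e]] := IH us ins.
exists (h j *m L), R => X; rewrite e {1}/gsel (negbTE ne).
by rewrite !mulmxA.
Qed.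

Lemma PL3 h i X Y s : (forall j, j != i -> cm (h j) Y) -> i \notin s ->
  cm (fprod (gsel h i X) s) Y.
Proof.
move=> hc; elim: s => /= [|j s IH]; first by rewrite /cm mulmx1 mul1mx.
rewrite in_cons negb_or => /andP[ne ns].
rewrite /cm /gsel eq_sym (negbTE ne) -mulmxA (IH ns) mulmxA (hc j _) 1?eq_sym //.
by rewrite mulmxA.
Qed.

Lemma PL4 h i X Y s : uniq s -> i \in s -> (forall j, j != i -> cm (h j) Y) ->
  fprod (gsel h i X) s *m Y = fprod (gsel h i (X *m Y)) s.
Proof.
move=> + + hc; elim: s => //= j s IH /andP[js us]; rewrite in_cons.
case: (eqVneq j i) => [eji _|ne /= ins].
  subst j; rewrite {1 3}/gsel eqxx -mulmxA (PL3 _ _ X _ _ hc js) mulmxA.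
  by rewrite (PL1 _ _ X (X *m Y) _ js).
rewrite -mulmxA IH // {1 3}/gsel (negbTE ne).
by [].
Qed.

Lemma mxprod_lin h i (I : Type) (t : seq I) (P : pred I) (c : I -> F) (Xs : I -> 'M[F]_r) :
  mxprod_ord (gsel h i (\sum_(j <- t | P j) c j *: Xs j)) =
  \sum_(j <- t | P j) c j *: mxprod_ord (gsel h i (Xs j)).
Proof.
have [L [R e]] := PL2 h i _ (enum_uniq 'I_k) (mem_enum 'I_k i).
have e' : forall X, mxprod_ord (gsel h i X) = L *m X *m R by exact: e.
rewrite e' mulmx_sumr mulmx_suml.
by apply: eq_bigr => j _; rewrite e' -scalemxAr -scalemxAl.
Qed.

End Prod.
Arguments gsel {F r k}.
Arguments fprod {F r k}.
Arguments mxprod_eq {F r k}.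
Arguments PL1 {F r k}.
Arguments PL2 {F r k}.
Arguments PL3 {F r k}.
Arguments PL4 {F r k}.
Arguments mxprod_lin {F r k}.

Section Inv.
Variable (F : fieldType) (r : nat).
Implicit Types (M P Q : 'M[F]_r).

Lemma invmxM' P Q : P \in unitmx -> Q \in unitmx ->
  invmx (P *m Q) = invmx Q *m invmx P.
Proof.
move=> uP uQ.
have U : P *m Q \in unitmx by rewrite unitmx_mul uP uQ.
rewrite -[RHS]mulmx1 -(mulmxV U) !mulmxA.
rewrite -(mulmxA (invmx Q) (invmx P) P) (mulVmx uP) mulmx1 (mulVmx uQ) mul1mx.
by [].
Qed.

Lemma mpoch_unit M p : (forall q : nat, M + (q%:R)%:M \in unitmx) ->
  mpoch M p \in unitmx.
Proof.
move=> h; elim: p => [|p IH] /=; first exact: unitmx1.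
by rewrite unitmx_mul IH h.
Qed.

Lemma cm_inv P Q : P \in unitmx -> Q \in unitmx -> cm P Q ->
  cm (invmx P) (invmx Q).
Proof. by move=> uP uQ h; rewrite /cm -!invmxM' // h. Qed.

Lemma mpochinv_split M j p : (j <= p)%N ->
  (forall q : nat, M + (q%:R)%:M \in unitmx) ->
  mpochinv (M + (j%:R)%:M) (p - j) *m mpochinv M j = mpochinv M p.
Proof.
move=> hjp h; rewrite /mpochinv -invmxM'.
- by rewrite -mpoch_add subnKC.
- exact: mpoch_unit h.
- apply: mpoch_unit => q; rewrite -addrA -(raddfD (@scalar_mx F r)) -natrD.
  exact: h.
Qed.

End Inv.
Arguments invmxM' {F r}.
Arguments mpoch_unit {F r}.
Arguments cm_inv {F r}.
Arguments mpochinv_split {F r}.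

Lemma fact_dec (F : numFieldType) k (m : 'I_k -> nat) (i : 'I_k) n1 :
  (n1 <= m i)%N ->
  (\prod_(j < k) ((dec_at m i n1 j)`!)%:R)^-1 =
  (\prod_(j < k) ((m j)`!)%:R)^-1 * ((m i ^_ n1)%:R : F).
Proof.
move=> h.
rewrite (bigD1 i) //= [in RHS](bigD1 i) //=.
have -> : \prod_(j < k | j != i) ((dec_at m i n1 j)`!)%:R =
          \prod_(j < k | j != i) ((m j)`!)%:R :> F.
  by apply: eq_bigr => j /negbTE hj; rewrite /dec_at hj.
rewrite {1}/dec_at eqxx -(ffact_fact h) -!natr_prod -!natrM.
have p1 : (0 < \prod_(j < k | j != i) (m j)`!)%N by apply: prodn_gt0 => j; exact: fact_gt0.
have p2 : (0 < (m i - n1)`!)%N by exact: fact_gt0.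
have p3 : (0 < m i ^_ n1)%N by rewrite ffact_gt0.
set a := (\prod_(j < k | j != i) (m j)`!)%N in p1 *.
set b := ((m i - n1)`!)%N in p2 *.
set c := (m i ^_ n1)%N in p3 *.
rewrite !natrM.
have ha : (a%:R : F) != 0 by rewrite pnatr_eq0 -lt0n.
have hb : (b%:R : F) != 0 by rewrite pnatr_eq0 -lt0n.
have hc : (c%:R : F) != 0 by rewrite pnatr_eq0 -lt0n.
by field; rewrite ?ha ?hb ?hc.
Qed.

Lemma sum_dec k (m : 'I_k -> nat) (i : 'I_k) n1 :
  (n1 <= m i)%N -> (\sum_(j < k) dec_at m i n1 j = \sum_(j < k) m j - n1)%N.
Proof.
move=> h.
rewrite (bigD1 i) //= [in RHS](bigD1 i) //=.
have -> : (\sum_(j < k | j != i) dec_at m i n1 j = \sum_(j < k | j != i) m j)%N.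
  by apply: eq_bigr => j /negbTE hj; rewrite /dec_at hj.
by rewrite /dec_at eqxx addnBAC.
Qed.

Lemma gen (F : numFieldType) r k (A : 'M[F]_r) (B C B0 : 'I_k -> 'M[F]_r)
  (i : 'I_k) (m : 'I_k -> nat) (n : nat)
  (hC : forall j (q : nat), C j + (q%:R)%:M \in unitmx)
  (hCC : forall a b, C a *m C b = C b *m C a)
  (Bj : nat -> 'M[F]_r) (cf : nat -> F) (Bf : nat -> 'I_k -> 'M[F]_r)
  (hB0 : forall l, l != i -> B0 l = B l)
  (hexp : mpoch (B0 i) (m i) = \sum_(j < n.+1) cf j *: ((m i ^_ j)%:R *: Bj j))
  (hBf : forall (j : nat) l, (j <= m i)%N ->
     mpoch (Bf j l) (dec_at m i j l) = if l == i then Bj j else mpoch (B l) (m l)) :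
  FA_coef A B0 C m =
  \sum_(j < n.+1 | (j <= m i)%N)
     cf j *: (mpoch A j *m FA_coef (A + (j%:R)%:M) (Bf j) (shift_at C i j%:Z) (dec_at m i j)
              *m mpochinv (C i) j).
Proof.
set hB := fun l => mpoch (B l) (m l).
set hCf := fun l => mpochinv (C l) (m l).
have eB : mxprod_ord (fun l => mpoch (B0 l) (m l)) =
          mxprod_ord (gsel hB i (mpoch (B0 i) (m i))).
  apply: mxprod_eq => l; rewrite /gsel; case: eqVneq => [->|ne] //.
  by rewrite hB0.
have eC : mxprod_ord (fun l => mpochinv (C l) (m l)) =
          mxprod_ord (gsel hCf i (mpochinv (C i) (m i))).
  by apply: mxprod_eq => l; rewrite /gsel; case: eqVneq => [->|].
have hmi : (m i <= \sum_(l < k) m l)%N by rewrite (bigD1 i) //= leq_addr.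
have hexp' : mpoch (B0 i) (m i) =
    \sum_(j < n.+1) (cf j * (m i ^_ j)%:R) *: Bj j.
  by rewrite hexp; apply: eq_bigr => j _; rewrite scalerA.
rewrite /FA_coef eB eC hexp'.
rewrite (mxprod_lin hB i _ _ _ (fun j : 'I_n.+1 => cf j * (m i ^_ j)%:R) (fun j : 'I_n.+1 => Bj j)).
rewrite mulmx_sumr mulmx_suml scaler_sumr [RHS]big_mkcond /=.
apply: eq_bigr => j _.
case: (leqP j (m i)) => hj; last first.
  by rewrite ffact_small // mulr0 scale0r mulmx0 mul0mx scaler0.
have eB' : mxprod_ord (fun l => mpoch (Bf j l) (dec_at m i j l)) =
           mxprod_ord (gsel hB i (Bj j)).
  by apply: mxprod_eq => l; rewrite hBf.
have eC' : mxprod_ord (fun l => mpochinv (shift_at C i j%:Z l) (dec_at m i j l)) =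
           mxprod_ord (gsel hCf i (mpochinv (C i + (j%:R)%:M) (m i - j))).
  by apply: mxprod_eq => l; rewrite /gsel /shift_at /dec_at; case: eqVneq => [->|].
have hA : mpoch A j *m mpoch (A + (j%:R)%:M) (\sum_(l < k) m l - j) =
          mpoch A (\sum_(l < k) m l).
  by rewrite -mpoch_add subnKC // (leq_trans hj hmi).
have hcm : forall l, l != i -> cm (hCf l) (mpochinv (C i) j).
  move=> l _; apply: cm_inv; try exact: mpoch_unit (hC _).
  exact: cm_poch2 (hCC l i).
have hCY : mxprod_ord (gsel hCf i (mpochinv (C i + (j%:R)%:M) (m i - j)))
             *m mpochinv (C i) j = mxprod_ord (gsel hCf i (mpochinv (C i) (m i))).
  rewrite /mxprod_ord.
  rewrite (PL4 _ _ _ _ _ (enum_uniq 'I_k) (mem_enum 'I_k i) hcm).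
  by rewrite mpochinv_split.
rewrite eB' eC' sum_dec //.
rewrite -?scalemxAr -?scalemxAl -?scalemxAr -?scalemxAl -?scalemxAr !scalerA.
rewrite !mulmxA hA -(mulmxA _ _ (mpochinv (C i) j)) hCY.
rewrite (@fact_dec F k m i j hj).
by congr (_ *: _); ring.
Qed.

Theorem mainTheorem3 (R : realType) (r k : nat) (hk : (1 <= k)%N)
  (A : 'M[R[i]]_r) (B C : 'I_k -> 'M[R[i]]_r)
  (hC : forall (j : 'I_k) (m : nat), C j + (m%:R)%:M \in unitmx)
  (hCC : forall i j : 'I_k, C i *m C j = C j *m C i)
  (i : 'I_k) (n : nat) (hn : (1 <= n)%N)
  (hB : forall m : nat, B i + (m%:R)%:M \in unitmx) :
  (forall m : 'I_k -> nat,
     FA_coef A (shift_at B i n%:Z) C m =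
     \sum_(n1 < n.+1 | (n1 <= m i)%N)
        ('C(n, n1)%:R *:
          (mpoch A n1
           *m FA_coef (A + (n1%:R)%:M) (shift_at B i n1%:Z) (shift_at C i n1%:Z)
                (dec_at m i n1)
           *m mpochinv (C i) n1)))
  /\
  ((forall n1 : nat, (n1 <= n)%N -> B i - (n1%:R)%:M \in unitmx) ->
   forall m : 'I_k -> nat,
     FA_coef A (shift_at B i (- n%:Z)) C m =
     \sum_(n1 < n.+1 | (n1 <= m i)%N)
        (((-1) ^+ n1 * 'C(n, n1)%:R) *:
          (mpoch A n1
           *m FA_coef (A + (n1%:R)%:M) B (shift_at C i n1%:Z) (dec_at m i n1)
           *m mpochinv (C i) n1))).
Proof.
split.
- move=> m.
  apply: (@gen _ r k A B C (shift_at B i n%:Z) i m n hC hCC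
    (fun j => mpoch (B i + (j%:R)%:M) (m i - j)) (fun j => 'C(n, j)%:R)
    (fun j => shift_at B i j%:Z)).
  + by move=> l ne; rewrite /shift_at (negbTE ne).
  + rewrite /shift_at eqxx.
    have e := poch_plus (B i) n (m i); rewrite big_mkord in e.
    exact: e.
  + by move=> j l hj; rewrite /shift_at /dec_at; case: eqVneq => [->|].
- move=> hBn m.
  apply: (@gen _ r k A B C (shift_at B i (- n%:Z)) i m n hC hCC
    (fun j => mpoch (B i) (m i - j)) (fun j => (-1) ^+ j * 'C(n, j)%:R)
    (fun _ => B)).
  + by move=> l ne; rewrite /shift_at (negbTE ne).
  + rewrite /shift_at eqxx mulrNz (raddfN (@scalar_mx _ r)).
    have e := poch_minus (B i) n (m i); rewrite big_mkord in e.
    exact: e.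
  + by move=> j l hj; rewrite /dec_at; case: eqVneq => [->|].
Qed.
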